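(* Consider the Robust protocol with parameters $k,\varepsilon,c$ (described in the context) run on any event stream chosen by a white-box adaptive adversary. Let $R_N$ be the number of rounds the protocol performs to process the first $N$ events. Then \[ \mathbb E[R_N]=\Theta\!\left(\frac{\log N}{\log\!\left(1+\frac{\sqrt k\,\varepsilon}{c}\right)}\right). \] Moreover, for any $\delta\in(0,1)$, with probability at least $1-\delta$, \[ R_N=O\!\left(\frac{\log N}{\log\!\left(1+\frac{\sqrt k\,\varepsilon}{c}\right)}+\log\frac1\delta\right), \] where the implicit constant is absolute and independent of $\delta,\varepsilon,k,N$.
   Context: Distributed counting: a server and $k$ sites; events arrive one at a time, each at some site; $n_i$ is the number of events at site $i$ so far. Robust protocol with parameters $k$, $\varepsilon>0$, $c\ge1$: each site $i$ keeps a transmission probability $p$ (initially $1$, updated by server broadcasts) and its count $n_i$. On each event at site $i$: $n_i\gets n_i+1$, and independently with probability $p$ the site sends ReportSample to the server. On receiving CountRequest, site $i$ sends its current $n_i$. The server keeps a counter $B=0$, values $\bar n_i=0$, and $p=1$; its estimate is $\hat n=\bar n+B/p$ with $\bar n=\sum_i\bar n_i$. On receiving ReportSample the server sets $B\gets B+1$; if now $B=k$, the round ends and a new round begins: the server broadcasts CountRequest, sets each $\bar n_i$ to the reported exact $n_i$, sets $p\gets\min\{1,c\sqrt k/(\varepsilon\bar n)\}$, broadcasts $p$, and sets $B\gets0$. A white-box adaptive adversary chooses the site of each next event as an arbitrary function of the full history of states, realized randomness and messages. *)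

(* Defs.v *)
From Stdlib Require Import Reals Lra Lia List.
Import ListNotations.
Open Scope R_scope.

(** Robust distributed-counting protocol (k sites, one server).
    Sites are indexed by natural numbers 0 .. k-1. *)

Record state := mkState {
  cnt   : nat -> nat;
  nbarS : nat -> nat;   (* \bar n_i : last reported count of site i at the server *)
  Bctr  : nat;
  prob  : R;            (* current transmission probability p (server = sites) *)
  rounds : nat
}.

Definition init_state : state :=
  mkState (fun _ => 0%nat) (fun _ => 0%nat) 0%nat 1 0%nat.

Definition sum_sites (k : nat) (f : nat -> nat) : nat :=
  fold_right Nat.add 0%nat (map f (seq 0 k)).

Definition upd (f : nat -> nat) (i v : nat) : nat -> nat :=
  fun j => if Nat.eqb j i then v else f j.

Definition estimate (k : nat) (s : state) : R :=
  INR (sum_sites k (nbarS s)) + INR (Bctr s) / prob s.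

(** One event at site [i]; [b] is the realized outcome of the site's
    Bernoulli(p) coin deciding whether ReportSample is sent. *)
Definition step (k : nat) (eps c : R) (s : state) (i : nat) (b : bool) : state :=
  let n' := upd (cnt s) i (S (cnt s i)) in
  if b then
    let B' := S (Bctr s) in
    if Nat.eqb B' k then
      (* round ends: CountRequest, exact counts reported, p recomputed, B reset *)
      let nb := INR (sum_sites k n') in
      mkState n' n' 0%nat (Rmin 1 (c * sqrt (INR k) / (eps * nb))) (S (rounds s))
    else mkState n' (nbarS s) B' (prob s) (rounds s)
  else mkState n' (nbarS s) (Bctr s) (prob s) (rounds s).

(** History of the run: chronological list of (site of the event, coin outcome).
    Everything else (states, messages) is a deterministic function of it. *)
Definition history := list (nat * bool).

(** A (white-box, adaptive, deterministic) adversary: chooses the site of the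
    next event as a function of the full history. *)
Definition adversary := history -> nat.

Fixpoint expect (k : nat) (eps c : R) (adv : adversary) (N : nat)
    (h : history) (s : state) (g : state -> R) : R :=
  match N with
  | O => g s
  | S N' =>
      let i := adv h in
      prob s * expect k eps c adv N' (h ++ [(i, true)]) (step k eps c s i true) g
      + (1 - prob s) * expect k eps c adv N' (h ++ [(i, false)]) (step k eps c s i false) g
  end.

Definition ERounds (k : nat) (eps c : R) (adv : adversary) (N : nat) : R :=
  expect k eps c adv N [] init_state (fun s => INR (rounds s)).

Definition PRoundsLe (k : nat) (eps c : R) (adv : adversary) (N : nat) (x : R) : R :=
  expect k eps c adv N [] init_state
    (fun s => if Rle_dec (INR (rounds s)) x then 1 else 0).

Definition rate (k : nat) (eps c : R) (N : nat) : R :=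
  ln (INR N) / ln (1 + sqrt (INR k) * eps / c).

(* Main.v *)
Require Import Defs.
From Stdlib Require Import Reals Lra Lia List.
Import ListNotations.
Open Scope R_scope.

Lemma ln_le' x y : 0 < x -> x <= y -> ln x <= ln y.
Proof. intros Hx Hxy. destruct (Req_dec x y) as [->|Hne]; [lra|].
  left; apply ln_increasing; lra. Qed.

Lemma exp_le' x y : x <= y -> exp x <= exp y.
Proof. intros H. destruct (Req_dec x y) as [->|Hne]; [lra|]. left; apply exp_increasing; lra. Qed.

Lemma ln_le_sub1 y : 0 < y -> ln y <= y - 1.
Proof. intros Hy. pose proof (exp_ineq1_le (ln y)). rewrite exp_ln in H; lra. Qed.

Lemma ln_ge_frac y : 0 < y -> ln (1 + y) >= y / (1 + y).
Proof. intros Hy. pose proof (ln_le_sub1 (/ (1 + y))) as H.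
  rewrite ln_Rinv in H by lra.
  assert (/ (1+y) - 1 = - (y / (1+y))) by (field; lra).
  assert (0 < / (1+y)) by (apply Rinv_0_lt_compat; lra). lra. Qed.

Lemma ln_ge_frac' y : 0 <= y -> ln (1 + y) >= y / (1 + y).
Proof. intros Hy. destruct (Req_dec y 0) as [->|]. replace (1+0) with 1 by ring. rewrite ln_1. unfold Rdiv. rewrite Rmult_0_l. lra.
  apply ln_ge_frac; lra. Qed.

Lemma ln_0 : ln 0 = 0.
Proof. unfold ln. case Rlt_dec; intros; [exfalso; apply (Rlt_irrefl 0); assumption|reflexivity]. Qed.

Lemma ln_nonneg y : 1 <= y -> 0 <= ln y.
Proof. intros H. rewrite <- ln_1. apply ln_le'; lra. Qed.

Lemma exp_sub1_le a : exp a - 1 <= a * exp a.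
Proof. pose proof (exp_ineq1_le (-a)). pose proof (exp_pos a).
  assert (exp (-a) * exp a = 1) by (rewrite <- exp_plus; replace (-a + a) with 0 by ring; apply exp_0).
  nra. Qed.

Lemma one_sub_expneg d : 0 <= d -> 1 - exp (- d) >= d / (1 + d).
Proof. intros Hd. pose proof (exp_ineq1_le d).
  assert (exp (-d) * exp d = 1) by (rewrite <- exp_plus; replace (-d + d) with 0 by ring; apply exp_0).
  pose proof (exp_pos d). pose proof (exp_pos (-d)).
  assert (exp (-d) <= 1 / (1+d)).
  { apply Rmult_le_reg_r with (1+d); [lra|]. unfold Rdiv. rewrite Rmult_assoc, Rinv_l by lra. nra. }
  assert (1 - 1/(1+d) = d/(1+d)) by (field; lra). lra. Qed.

Lemma ln_concave2 p a b : 0 <= p <= 1 -> 0 < a -> 0 < b ->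
  p * ln a + (1 - p) * ln b <= ln (p * a + (1 - p) * b).
Proof. intros Hp Ha Hb. set (m := p * a + (1-p) * b).
  assert (Hm : 0 < m) by (unfold m; nra).
  pose proof (ln_le_sub1 (a / m)) as H1. pose proof (ln_le_sub1 (b / m)) as H2.
  assert (0 < a/m) by (apply Rdiv_lt_0_compat; lra).
  assert (0 < b/m) by (apply Rdiv_lt_0_compat; lra).
  specialize (H1 H). specialize (H2 H0).
  unfold Rdiv in H1, H2. rewrite ln_mult, ln_Rinv in H1, H2 by (try apply Rinv_0_lt_compat; lra).
  assert (p * (a * / m - 1) + (1-p) * (b * /m - 1) = 0) by (unfold m in *; field; lra).
  nra. Qed.

Lemma sum_sites_S k f : sum_sites (S k) f = (sum_sites k f + f k)%nat.
Proof. unfold sum_sites. rewrite seq_S, map_app, fold_right_app. simpl.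
  generalize (map f (seq 0 k)). intros l. induction l; simpl; lia. Qed.

Lemma sum_sites_ext k f g : (forall j, (j < k)%nat -> f j = g j) -> sum_sites k f = sum_sites k g.
Proof. induction k; intros H; [reflexivity|]. rewrite !sum_sites_S, IHk by (intros; apply H; lia).
  rewrite H by lia. reflexivity. Qed.

Lemma sum_sites_upd k f i : (i < k)%nat -> sum_sites k (upd f i (S (f i))) = S (sum_sites k f).
Proof. induction k; intros Hi; [lia|]. rewrite !sum_sites_S.
  destruct (Nat.eq_dec i k) as [->|Hne].
  - rewrite (sum_sites_ext k _ f). unfold upd. rewrite Nat.eqb_refl. lia.
    intros j Hj. unfold upd. destruct (Nat.eqb_spec j k); [lia|reflexivity].
  - rewrite IHk by lia. unfold upd. destruct (Nat.eqb_spec k i); [lia|]. lia. Qed.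

Definition tot k s := sum_sites k (cnt s).
Definition nbt k s := sum_sites k (nbarS s).

Lemma tot_step k eps c s i b : (i < k)%nat -> tot k (step k eps c s i b) = S (tot k s).
Proof. intros Hi. unfold step, tot. destruct b; [destruct (Nat.eqb (S (Bctr s)) k)|]; simpl;
  apply sum_sites_upd; assumption. Qed.

Section E.
Variables (k : nat) (eps c : R) (adv : adversary).
Hypothesis Hadv : forall h, (adv h < k)%nat.

Lemma expect_ext N : forall h s g g',
  (forall s', tot k s' = (tot k s + N)%nat -> g s' = g' s') ->
  expect k eps c adv N h s g = expect k eps c adv N h s g'.
Proof. induction N; intros h s g g' H; simpl.
  - apply H. lia.
  - rewrite (IHN _ (step k eps c s (adv h) true) g g'), (IHN _ (step k eps c s (adv h) false) g g'). reflexivity.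
    all: intros s' Hs'; apply H; rewrite (tot_step k eps c s (adv h)) in Hs' by apply Hadv; lia. Qed.

Lemma expect_lin N : forall h s g a b,
  expect k eps c adv N h s (fun s => a * g s + b) = a * expect k eps c adv N h s g + b.
Proof. induction N; intros h s g a b; simpl; [reflexivity|]. rewrite !IHN. ring. Qed.

Definition pinv (s : state) := 0 <= prob s <= 1.

Lemma step_pinv s i b : 0 <= c -> 0 < eps -> pinv s -> pinv (step k eps c s i b).
Proof. intros Hc He Hp. unfold step, pinv in *. destruct b; [destruct (Nat.eqb (S (Bctr s)) k)|]; simpl; try lra.
  set (y := c * sqrt (INR k) / (eps * INR (sum_sites k _))).
  assert (0 <= y). { unfold y, Rdiv. apply Rmult_le_pos. apply Rmult_le_pos; [lra| apply sqrt_pos].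
    destruct (Req_dec (eps * INR (sum_sites k (upd (cnt s) i (S (cnt s i))))) 0) as [E|E].
    rewrite E, Rinv_0; lra. left; apply Rinv_0_lt_compat. pose proof (pos_INR (sum_sites k (upd (cnt s) i (S (cnt s i))))).
    assert (0 <= eps * INR (sum_sites k (upd (cnt s) i (S (cnt s i))))) by (apply Rmult_le_pos; lra). lra. }
  unfold Rmin. destruct (Rle_dec 1 y); lra. Qed.

Lemma expect_mono N : forall h s g1 g2, 0 <= c -> 0 < eps -> pinv s -> (forall s, g1 s <= g2 s) ->
  expect k eps c adv N h s g1 <= expect k eps c adv N h s g2.
Proof. induction N; intros h s g1 g2 Hc He Hp H; cbn [expect]; [apply H|].
  pose proof (IHN (h ++ [(adv h, true)]) (step k eps c s (adv h) true) g1 g2 Hc He (step_pinv _ _ _ Hc He Hp) H).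
  pose proof (IHN (h ++ [(adv h, false)]) (step k eps c s (adv h) false) g1 g2 Hc He (step_pinv _ _ _ Hc He Hp) H).
  unfold pinv in Hp. apply Rplus_le_compat; apply Rmult_le_compat_l; lra. Qed.

Lemma expect_pos N : forall h s g, 0 <= c -> 0 < eps -> pinv s -> (forall s, 0 < g s) ->
  0 < expect k eps c adv N h s g.
Proof. induction N; intros h s g Hc He Hp H; cbn [expect]; [apply H|].
  pose proof (IHN (h ++ [(adv h, true)]) (step k eps c s (adv h) true) g Hc He (step_pinv _ _ _ Hc He Hp) H).
  pose proof (IHN (h ++ [(adv h, false)]) (step k eps c s (adv h) false) g Hc He (step_pinv _ _ _ Hc He Hp) H).
  unfold pinv in Hp. nra. Qed.

Lemma expect_jensen N : forall h s f, 0 <= c -> 0 < eps -> pinv s ->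
  expect k eps c adv N h s f <= ln (expect k eps c adv N h s (fun s => exp (f s))).
Proof. induction N; intros h s f Hc He Hp; cbn [expect].
  - rewrite ln_exp; lra.
  - set (st := step k eps c s (adv h) true). set (sf := step k eps c s (adv h) false).
    pose proof (IHN (h ++ [(adv h, true)]) st f Hc He (step_pinv _ _ _ Hc He Hp)).
    pose proof (IHN (h ++ [(adv h, false)]) sf f Hc He (step_pinv _ _ _ Hc He Hp)).
    pose proof (expect_pos N (h ++ [(adv h, true)]) st (fun s => exp (f s)) Hc He (step_pinv _ _ _ Hc He Hp) (fun s => exp_pos _)).
    pose proof (expect_pos N (h ++ [(adv h, false)]) sf (fun s => exp (f s)) Hc He (step_pinv _ _ _ Hc He Hp) (fun s => exp_pos _)).
    unfold pinv in Hp.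
    eapply Rle_trans; [|apply ln_concave2; eauto].
    nra. Qed.

Lemma expect_super (Inv : state -> Prop) (Phi g : state -> R) :
  (forall s, Inv s -> pinv s) ->
  (forall s i, Inv s -> (i < k)%nat -> prob s <> 0 -> Inv (step k eps c s i true)) ->
  (forall s i, Inv s -> (i < k)%nat -> prob s <> 1 -> Inv (step k eps c s i false)) ->
  (forall s i, Inv s -> (i < k)%nat ->
     prob s * Phi (step k eps c s i true) + (1 - prob s) * Phi (step k eps c s i false) <= Phi s) ->
  (forall s, Inv s -> g s <= Phi s) ->
  forall N h s, Inv s -> expect k eps c adv N h s g <= Phi s.
Proof. intros H1 H2 H3 H4 H5. induction N; intros h s Hs; cbn [expect]; [auto|].
  pose proof (H4 s (adv h) Hs (Hadv h)). pose proof (H1 s Hs) as [Hp0 Hp1].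
  assert (A : prob s * expect k eps c adv N (h ++ [(adv h, true)]) (step k eps c s (adv h) true) g
              <= prob s * Phi (step k eps c s (adv h) true)).
  { destruct (Req_dec (prob s) 0) as [E|E]. rewrite E; lra.
    apply Rmult_le_compat_l; [lra|]. apply IHN, H2; auto. }
  assert (B : (1 - prob s) * expect k eps c adv N (h ++ [(adv h, false)]) (step k eps c s (adv h) false) g
              <= (1 - prob s) * Phi (step k eps c s (adv h) false)).
  { destruct (Req_dec (prob s) 1) as [E|E]. rewrite E; lra.
    apply Rmult_le_compat_l; [lra|]. apply IHN, H3; auto. }
  lra. Qed.
End E.

Lemma Rdiv_le_0_compat' a b : 0 <= a -> 0 < b -> 0 <= a / b.
Proof. intros. unfold Rdiv. apply Rmult_le_pos; [lra|]. left; apply Rinv_0_lt_compat; lra. Qed.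

Lemma exp2_le9 : exp 2 <= 9.
Proof. replace 2 with (1+1) by ring. rewrite exp_plus. pose proof exp_le_3. pose proof (exp_pos 1). nra. Qed.

Lemma conv_lemma p u A d : 0 <= p <= 1 -> p * (exp A - 1) <= (1 - p) * (1 - exp (- d)) ->
  p * exp (u + A) + (1 - p) * exp (u - d) <= exp u.
Proof. intros Hp H. unfold Rminus at 2. rewrite !exp_plus. pose proof (exp_pos u).
  assert (p * exp A + (1 - p) * exp (-d) <= 1) by nra. nra. Qed.

Lemma frac_mono d e : 0 <= e <= d -> e / (1 + e) <= d / (1 + d).
Proof. intros H. apply Rmult_le_reg_r with ((1+e)*(1+d)). nra.
  replace (e / (1 + e) * ((1 + e) * (1 + d))) with (e * (1+d)) by (field; lra).
  replace (d / (1 + d) * ((1 + e) * (1 + d))) with (d * (1+e)) by (field; lra). nra. Qed.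

Lemma drift_lb lam M : 0 < lam -> 0 < M ->
  1 - exp (- (lam * (ln (M + 1) - ln M))) >= lam / (M + 1 + lam).
Proof. intros Hl HM.
  assert (ln (M+1) - ln M >= 1 / (M+1)).
  { replace (ln (M+1) - ln M) with (ln (1 + 1/M)).
    - pose proof (ln_ge_frac (1/M)) as H. assert (0 < 1/M) by (apply Rdiv_lt_0_compat; lra).
      specialize (H H0). replace (1 / M / (1 + 1 / M)) with (1/(M+1)) in H by (field; lra). lra.
    - replace (1 + 1/M) with ((M+1) * / M) by (field; lra). rewrite ln_mult, ln_Rinv; try lra.
      apply Rinv_0_lt_compat; lra. }
  set (d := lam * (ln (M + 1) - ln M)). set (e := lam / (M+1)).
  assert (0 < e) by (apply Rdiv_lt_0_compat; lra).
  assert (e <= d). { unfold d, e. unfold Rdiv in *. nra. }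
  pose proof (one_sub_expneg d ltac:(lra)). pose proof (frac_mono d e ltac:(lra)).
  replace (e / (1+e)) with (lam / (M + 1 + lam)) in H3 by (unfold e; field; lra). lra. Qed.

Lemma core_N p a lam beta M : 0 < p < 1 -> 0 < beta <= 1/64 -> 0 < lam -> a = beta / p ->
  2 * a <= M -> lam * a <= M ->
  p * exp (- lam * ln (M + 1 - a)) + (1 - p) * exp (- lam * ln (M + 1)) <= exp (- lam * ln M).
Proof. intros Hp Hb Hl Ha H2a Hla.
  assert (Hpa : p * a = beta) by (rewrite Ha; field; lra).
  assert (Ha0 : 0 < a) by (rewrite Ha; apply Rdiv_lt_0_compat; lra).
  assert (HM : 0 < M) by lra.
  set (u := - lam * ln M).
  set (A := lam * (ln M - ln (M + 1 - a))).
  set (d := lam * (ln (M + 1) - ln M)).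
  replace (- lam * ln (M + 1 - a)) with (u + A) by (unfold u, A; ring).
  replace (- lam * ln (M + 1)) with (u - d) by (unfold u, d; ring).
  apply conv_lemma; [lra|].
  pose proof (drift_lb lam M Hl HM) as Hd. fold d in Hd.
  assert (Hlm : 0 < lam / (M + 1 + lam)) by (apply Rdiv_lt_0_compat; lra).
  destruct (Rle_dec a 1) as [Ha1|Ha1].
  - assert (A <= 0). { unfold A. assert (ln M <= ln (M + 1 - a)) by (apply ln_le'; lra). nra. }
    assert (exp A <= 1) by (rewrite <- exp_0; apply exp_le'; lra). nra.
  - assert (Hpb : p < beta). { rewrite <- Hpa. nra. }
    assert (Hpos : 0 < M + 1 - a) by lra.
    assert (HA : A <= 2 * lam * (a - 1) / M).
    { unfold A. replace (ln M - ln (M + 1 - a)) with (ln (M / (M + 1 - a))).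
      - pose proof (ln_le_sub1 (M / (M + 1 - a)) ltac:(apply Rdiv_lt_0_compat; lra)).
        replace (M / (M + 1 - a) - 1) with ((a - 1) / (M + 1 - a)) in H by (field; lra).
        assert ((a - 1) / (M + 1 - a) <= 2 * (a - 1) / M).
        { apply Rmult_le_reg_r with ((M + 1 - a) * M). nra.
          replace ((a - 1) / (M + 1 - a) * ((M + 1 - a) * M)) with ((a-1) * M) by (field; lra).
          replace (2 * (a - 1) / M * ((M + 1 - a) * M)) with (2 * (a-1) * (M + 1 - a)) by (field; lra). nra. }
        assert (lam * ln (M / (M + 1 - a)) <= lam * (2 * (a - 1) / M)) by (apply Rmult_le_compat_l; lra).
        replace (2 * lam * (a - 1) / M) with (lam * (2 * (a - 1) / M)) by (field; lra). lra.
      - unfold Rdiv. rewrite ln_mult, ln_Rinv; try lra. apply Rinv_0_lt_compat; lra. }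
    assert (HA2 : 2 * lam * (a - 1) / M <= 2).
    { apply Rmult_le_reg_r with M; [lra|]. replace (2 * lam * (a - 1) / M * M) with (2 * lam * (a-1)) by (field; lra). nra. }
    pose proof (exp_sub1_le A).
    assert (exp A <= 9). { eapply Rle_trans; [apply exp_le'|apply exp2_le9]. lra. }
    assert (HAn : 0 <= A). { unfold A. assert (ln (M + 1 - a) <= ln M) by (apply ln_le'; lra). nra. }
    assert (exp A - 1 <= 9 * A) by nra.
    assert (p * (exp A - 1) <= 18 * lam * beta / M).
    { assert (p * (exp A - 1) <= p * (9 * (2 * lam * (a - 1) / M))) by (apply Rmult_le_compat_l; lra).
      assert (p * (9 * (2 * lam * (a - 1) / M)) <= 18 * lam * beta / M).
      { rewrite <- Hpa. apply Rmult_le_reg_r with M; [lra|].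
        replace (p * (9 * (2 * lam * (a - 1) / M)) * M) with (18 * lam * (p * a - p)) by (field; lra).
        replace (18 * lam * (p * a) / M * M) with (18 * lam * (p * a)) by (field; lra). nra. }
      lra. }
    assert ((1 - p) * (1 - exp (- d)) >= (1 - beta) * (lam / (M + 1 + lam))).
    { assert (1 - beta <= 1 - p) by lra. assert (0 <= 1 - beta) by lra. nra. }
    assert (18 * lam * beta / M <= (1 - beta) * (lam / (M + 1 + lam))).
    { apply Rmult_le_reg_r with (M * (M + 1 + lam)). nra.
      replace (18 * lam * beta / M * (M * (M + 1 + lam))) with (18 * lam * beta * (M + 1 + lam)) by (field; lra).
      replace ((1 - beta) * (lam / (M + 1 + lam)) * (M * (M + 1 + lam))) with ((1 - beta) * lam * M) by (field; lra).
      assert (lam <= M) by nra.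
      assert (18 * beta * (M + 1 + lam) <= (1 - beta) * M) by nra. nra. }
    lra. Qed.

Lemma close_triv p A d : 0 < p < 1 -> exp A <= 1 -> 0 <= 1 - exp (- d) ->
  p * (exp A - 1) <= (1 - p) * (1 - exp (- d)).
Proof. intros. assert (p * (exp A - 1) <= p * 0) by (apply Rmult_le_compat_l; lra).
  assert (0 <= (1 - p) * (1 - exp (- d))) by (apply Rmult_le_pos; lra). lra. Qed.

Lemma core_E p a lam beta th x n : 0 < p < 1 -> 0 < beta <= 1/64 -> beta <= lam / 64 -> 0 < lam ->
  0 < x -> 1 <= lam * x -> 0 < th <= 1/256 -> 2 * th <= lam * ln (1 + beta * x) ->
  a = beta / p -> 0 < n -> a <= beta * x * n ->
  p * exp (th - lam * ln (1 + beta * x) - lam * ln (n + 1)) + (1 - p) * exp (- lam * ln (n + a + 1))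
    <= exp (- lam * ln (n + a)).
Proof. intros Hp Hb Hbl Hl Hx Hlx Ht Hg Ha Hn Han.
  assert (Hpa : p * a = beta) by (rewrite Ha; field; lra).
  assert (Ha0 : 0 < a) by (rewrite Ha; apply Rdiv_lt_0_compat; lra).
  set (M := n + a). assert (HM : 0 < M) by (unfold M; lra).
  set (u := - lam * ln M).
  set (A := th - lam * ln (1 + beta * x) + lam * (ln M - ln (n + 1))).
  set (d := lam * (ln (M + 1) - ln M)).
  replace (th - lam * ln (1 + beta * x) - lam * ln (n + 1)) with (u + A) by (unfold u, A; ring).
  replace (- lam * ln (M + 1)) with (u - d) by (unfold u, d; ring).
  apply conv_lemma; [lra|].
  pose proof (drift_lb lam M Hl HM) as Hd. fold d in Hd.
  assert (Hlm : 0 < lam / (M + 1 + lam)) by (apply Rdiv_lt_0_compat; lra).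
  assert (Hbx : 0 < beta * x) by nra.
  destruct (Rle_dec a 1) as [Ha1|Ha1].
  - assert (A <= 0). { unfold A. assert (ln M <= ln (n + 1)) by (apply ln_le'; unfold M; lra).
      assert (lam * (ln M - ln (n + 1)) <= lam * 0) by (apply Rmult_le_compat_l; lra). lra. }
    assert (exp A <= 1) by (rewrite <- exp_0; apply exp_le'; lra). apply close_triv; lra.
  - assert (Hpb : p < beta). { rewrite <- Hpa. nra. }
    set (v := a / n). assert (Hv : 0 < v) by (apply Rdiv_lt_0_compat; lra).
    assert (Hvb : v <= beta * x).
    { unfold v. apply Rmult_le_reg_r with n; [lra|]. replace (a / n * n) with a by (field; lra). lra. }
    assert (HMv : ln M - ln (n + 1) <= ln (1 + v)).
    { assert (ln n <= ln (n+1)) by (apply ln_le'; lra).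
      replace (ln (1 + v)) with (ln M - ln n). lra.
      replace (1 + v) with (M * / n) by (unfold v, M; field; lra). rewrite ln_mult, ln_Rinv; try lra.
      apply Rinv_0_lt_compat; lra. }
    set (A2 := th - lam * ln (1 + beta * x) + lam * ln (1 + v)).
    assert (HAA : A <= A2). { unfold A, A2. assert (lam * (ln M - ln (n + 1)) <= lam * ln (1 + v)) by (apply Rmult_le_compat_l; lra). lra. }
    destruct (Rle_dec A2 0) as [HA2|HA2].
    + assert (exp A <= 1) by (rewrite <- exp_0; apply exp_le'; lra). apply close_triv; lra.
    + assert (Hlnv : ln (1 + v) <= ln (1 + beta * x)) by (apply ln_le'; lra).
      assert (HA2t : A2 <= th). { unfold A2. assert (lam * ln (1 + v) <= lam * ln (1 + beta * x)) by (apply Rmult_le_compat_l; lra). lra. }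
      assert (HexpA : exp A - 1 <= 3 * th).
      { pose proof (exp_sub1_le A2). assert (exp A2 <= 3). { eapply Rle_trans; [apply exp_le'|apply exp_le_3]. lra. }
        assert (exp A <= exp A2) by (apply exp_le'; lra). nra. }
      assert (Hv2 : beta * x < 2 * v * (1 + beta * x)).
      { assert (lam * ln (1 + v) > lam * ln (1 + beta * x) / 2) by (unfold A2 in HA2; lra).
        assert (ln (1 + v) > ln (1 + beta * x) / 2).
        { apply Rmult_lt_reg_l with lam; [lra|]. lra. }
        pose proof (ln_ge_frac (beta * x) Hbx).
        pose proof (ln_le_sub1 (1 + v) ltac:(lra)).
        assert (beta * x / (1 + beta * x) < 2 * v) by lra.
        apply Rmult_lt_reg_r with (/ (1 + beta * x)). apply Rinv_0_lt_compat; lra.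
        replace (2 * v * (1 + beta * x) * / (1 + beta * x)) with (2 * v) by (field; lra). exact H3. }
      assert (Hn2 : n <= 2 * a / (beta * x) + 2 * a).
      { assert (n = a / v) by (unfold v; field; lra).
        rewrite H. apply Rmult_le_reg_r with (v * (beta * x)). apply Rmult_lt_0_compat; lra.
        replace (a / v * (v * (beta * x))) with (a * (beta * x)) by (field; lra).
        replace ((2 * a / (beta * x) + 2 * a) * (v * (beta * x))) with (a * (2 * v * (1 + beta * x))) by (field; lra).
        apply Rmult_le_compat_l; lra. }
      assert (HR : (1 - p) * (1 - exp (- d)) >= (1 - beta) * (lam / (M + 1 + lam))).
      { assert (1 - beta <= 1 - p) by lra. assert (0 <= 1 - beta) by lra.
        apply Rle_ge, Rmult_le_compat; lra. }
      assert (HL : p * (exp A - 1) <= 3 * th * beta / a).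
      { rewrite <- Hpa. destruct (Rle_dec (exp A - 1) 0). 
        - assert (p * (exp A - 1) <= 0) by (assert (p*(exp A - 1) <= p*0) by (apply Rmult_le_compat_l; lra); lra).
          assert (0 <= 3*th*(p*a)/a) by (apply Rdiv_le_0_compat'; [apply Rmult_le_pos; [lra|]; apply Rmult_le_pos; lra|lra]). lra.
        - replace (3 * th * (p * a) / a) with (p * (3 * th)) by (field; lra). apply Rmult_le_compat_l; lra. }
      assert (3 * th * beta / a <= (1 - beta) * (lam / (M + 1 + lam))).
      { apply Rmult_le_reg_r with (a * (M + 1 + lam)). apply Rmult_lt_0_compat; lra.
        replace (3 * th * beta / a * (a * (M + 1 + lam))) with (3 * th * beta * (M + 1 + lam)) by (field; lra).
        replace ((1 - beta) * (lam / (M + 1 + lam)) * (a * (M + 1 + lam))) with ((1 - beta) * lam * a) by (field; lra).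
        assert (HM1 : M + 1 + lam <= a * (2 / (beta * x) + 4 + lam)).
        { unfold M. replace (a * (2 / (beta * x) + 4 + lam)) with (2 * a / (beta * x) + 2 * a + 2 * a + a * lam) by (field; lra).
          assert (0 <= (a-1)*lam) by (apply Rmult_le_pos; lra). lra. }
        assert (Hk1 : beta * (2 / (beta * x) + 4 + lam) = 2 / x + 4 * beta + beta * lam) by (field; lra).
        assert (Hk2 : 2 / x <= 2 * lam).
        { apply Rmult_le_reg_r with x; [lra|]. replace (2 / x * x) with 2 by (field; lra). lra. }
        assert (Hk3 : beta * lam <= lam / 64). { replace (lam/64) with (1/64*lam) by field. apply Rmult_le_compat_r; lra. }
        assert (Hk4 : 3 * th * beta * (M + 1 + lam) <= 3 * th * a * (beta * (2 / (beta * x) + 4 + lam))).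
        { assert (0 <= 3 * th * beta) by (apply Rmult_le_pos; [apply Rmult_le_pos|]; lra).
          replace (3 * th * a * (beta * (2 / (beta * x) + 4 + lam))) with (3 * th * beta * (a * (2 / (beta * x) + 4 + lam))) by ring.
          apply Rmult_le_compat_l; lra. }
        rewrite Hk1 in Hk4.
        assert (Hk5 : 3 * th * a * (2 / x + 4 * beta + beta * lam) <= 3 * th * a * (2 * lam + 5 * lam / 64)).
        { apply Rmult_le_compat_l; [apply Rmult_le_pos; [apply Rmult_le_pos|]; lra|]. lra. }
        set (Q := a * lam). assert (0 < Q) by (apply Rmult_lt_0_compat; lra).
        assert (th * Q <= 1/256 * Q) by (apply Rmult_le_compat_r; lra).
        assert (beta * Q <= 1/64 * Q) by (apply Rmult_le_compat_r; lra).
        replace (3 * th * a * (2 * lam + 5 * lam / 64)) with (3 * 133 / 64 * (th * Q)) in Hk5 by (unfold Q; field).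
        replace ((1 - beta) * lam * a) with (Q - beta * Q) by (unfold Q; ring). lra. }
      lra. Qed.

Lemma ln_half y : 0 <= y -> ln (1 + y / 2) >= ln (1 + y) / 2.
Proof. intros Hy. assert (ln ((1 + y/2) * (1 + y/2)) >= ln (1 + y)).
  { apply Rle_ge, ln_le'. lra. replace ((1 + y/2) * (1 + y/2)) with (1 + y + (y/2)*(y/2)) by field.
    assert (0 <= (y/2)*(y/2)) by (apply Rmult_le_pos; lra). lra. }
  rewrite ln_mult in H by lra. lra. Qed.

Lemma ln_64 y : 0 <= y -> ln (1 + y / 64) >= ln (1 + y) / 64.
Proof. intros Hy.
  pose proof (ln_half y Hy). pose proof (ln_half (y/2) ltac:(lra)).
  pose proof (ln_half (y/2/2) ltac:(lra)). pose proof (ln_half (y/2/2/2) ltac:(lra)).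
  pose proof (ln_half (y/2/2/2/2) ltac:(lra)). pose proof (ln_half (y/2/2/2/2/2) ltac:(lra)).
  replace (y/2/2/2/2/2/2) with (y/64) in H4 by field. lra. Qed.

Lemma ln2_le1 : ln 2 <= 1.
Proof. pose proof (ln_le_sub1 2). lra. Qed.

Lemma ln_sq_half x : 0 < x -> ln (1 + x / (1 + ln (1 + x))) >= ln (1 + x) / 2.
Proof. intros Hx. set (L := ln (1 + x)). set (s := sqrt (1 + x)).
  assert (Hs2 : s * s = 1 + x) by (apply sqrt_sqrt; lra).
  assert (Hs1 : 1 <= s). { unfold s. pose proof (sqrt_le_1_alt 1 (1 + x) ltac:(lra)) as Q. rewrite sqrt_1 in Q. exact Q. }
  assert (HLs : L = 2 * ln s). { unfold L. rewrite <- Hs2, ln_mult by lra. ring. }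
  assert (HL0 : 0 < L). { unfold L. rewrite <- ln_1. apply ln_increasing; lra. }
  assert (Hsl : ln s <= s / 2).
  { pose proof (ln_le_sub1 (s/2) ltac:(lra)). unfold Rdiv in H. rewrite ln_mult, ln_Rinv in H by lra.
    pose proof ln2_le1. lra. }
  assert (HLs2 : L <= s) by lra.
  assert (1 + x / (1 + L) >= s).
  { apply Rle_ge. apply Rmult_le_reg_r with (1 + L); [lra|].
    replace ((1 + x / (1 + L)) * (1 + L)) with (1 + L + x) by (field; lra).
    assert (0 <= (s - 1) * (s - L)) by (apply Rmult_le_pos; lra). nra. }
  assert (ln s <= ln (1 + x / (1 + L))) by (apply ln_le'; lra). lra. Qed.

Section Params.
Variable x : R.
Hypothesis Hx : 0 < x.
Definition Lx := ln (1 + x).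
Definition lamx := 1 / Lx.
Definition betx := 1 / (64 * (1 + Lx)).

Lemma Lx_pos : 0 < Lx.
Proof. unfold Lx. rewrite <- ln_1. apply ln_increasing; lra. Qed.
Lemma Lx_le : Lx <= x.
Proof. unfold Lx. pose proof (ln_le_sub1 (1 + x)). lra. Qed.
Lemma Lx_ge : Lx >= x / (1 + x).
Proof. unfold Lx. apply ln_ge_frac; lra. Qed.

Lemma lam_pos : 0 < lamx.
Proof. unfold lamx. pose proof Lx_pos. apply Rdiv_lt_0_compat; lra. Qed.
Lemma bet_pos : 0 < betx <= 1/64.
Proof. unfold betx. pose proof Lx_pos. split. apply Rdiv_lt_0_compat; lra.
  apply Rmult_le_reg_r with (64 * (1 + Lx)); [lra|]. replace (1 / (64 * (1 + Lx)) * (64 * (1 + Lx))) with 1 by (field; lra). nra. Qed.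
Lemma bet_lam : betx <= lamx / 64.
Proof. unfold betx, lamx. pose proof Lx_pos. apply Rmult_le_reg_r with (64 * Lx * (1 + Lx)). nra.
  replace (1 / (64 * (1 + Lx)) * (64 * Lx * (1 + Lx))) with Lx by (field; lra).
  replace (1 / Lx / 64 * (64 * Lx * (1 + Lx))) with (1 + Lx) by (field; lra). lra. Qed.
Lemma lam_x : 1 <= lamx * x.
Proof. unfold lamx. pose proof Lx_pos. pose proof Lx_le. replace (1 / Lx * x) with (x / Lx) by (field; lra).
  apply Rmult_le_reg_r with Lx; [lra|]. replace (x / Lx * Lx) with x by (field; lra). lra. Qed.
Lemma P_gamma : 2 * (1/256) <= lamx * ln (1 + betx * x).
Proof. pose proof Lx_pos. pose proof (ln_sq_half x Hx). fold Lx in H0.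
  assert (0 <= x / (1 + Lx)) by (apply Rdiv_le_0_compat'; lra).
  pose proof (ln_64 _ H1). replace (x / (1 + Lx) / 64) with (betx * x) in H2 by (unfold betx; field; lra).
  unfold lamx. replace (1 / Lx * ln (1 + betx * x)) with (ln (1 + betx * x) / Lx) by (field; lra).
  apply Rmult_le_reg_r with Lx; [lra|]. replace (ln (1 + betx * x) / Lx * Lx) with (ln (1 + betx * x)) by (field; lra).
  lra. Qed.
Lemma P_lamb : lamx * betx * x <= 1 + 2 * betx * x.
Proof. pose proof Lx_pos. pose proof Lx_ge. pose proof bet_pos as [Hb1 Hb2].
  destruct (Rle_dec x 1) as [H1|H1].
  - assert (x <= 2 * Lx). { apply Rmult_le_reg_r with (/ (1 + x)). apply Rinv_0_lt_compat; lra.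
      assert (x * / (1+x) <= Lx) by (unfold Rdiv in H0; lra).
      assert (2 * Lx * / (1 + x) >= Lx). { apply Rle_ge. apply Rmult_le_reg_r with (1 + x); [lra|].
        replace (2 * Lx * / (1 + x) * (1 + x)) with (2 * Lx) by (field; lra). nra. }
      lra. }
    unfold lamx, betx. replace (1 / Lx * (1 / (64 * (1 + Lx))) * x) with (x / Lx / (64 * (1 + Lx))) by (field; lra).
    assert (x / Lx <= 2). { apply Rmult_le_reg_r with Lx; [lra|]. replace (x / Lx * Lx) with x by (field; lra). lra. }
    assert (x / Lx / (64 * (1 + Lx)) <= 1). { apply Rmult_le_reg_r with (64 * (1 + Lx)); [lra|].
      replace (x / Lx / (64 * (1 + Lx)) * (64 * (1 + Lx))) with (x / Lx) by (field; lra). nra. }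
    assert (0 <= betx * x) by (apply Rmult_le_pos; lra). unfold betx in H5. lra.
  - assert (Lx >= 1/2). { assert (x / (1 + x) >= 1/2). { apply Rle_ge. apply Rmult_le_reg_r with (1 + x); [lra|].
        replace (x / (1 + x) * (1 + x)) with x by (field; lra). lra. } lra. }
    assert (lamx <= 2). { unfold lamx. apply Rmult_le_reg_r with Lx; [lra|]. replace (1 / Lx * Lx) with 1 by (field; lra). lra. }
    assert (0 <= betx * x) by (apply Rmult_le_pos; lra).
    assert (lamx * (betx * x) <= 2 * (betx * x)) by (apply Rmult_le_compat_r; lra).
    replace (lamx * betx * x) with (lamx * (betx * x)) by ring. lra. Qed.
End Params.

Section Proto.
Variables (k : nat) (eps c : R).
Hypotheses (Hk : (1 <= k)%nat) (He : 0 < eps) (Hc : 1 <= c).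

Definition xx := sqrt (INR k) * eps / c.
Definition TT := c * sqrt (INR k) / eps.

Lemma sqrtk_pos : 0 < sqrt (INR k).
Proof. apply sqrt_lt_R0. apply lt_0_INR. lia. Qed.

Lemma xx_pos : 0 < xx.
Proof. pose proof sqrtk_pos. unfold xx. apply Rdiv_lt_0_compat; [nra|lra]. Qed.
Lemma TT_pos : 0 < TT.
Proof. pose proof sqrtk_pos. unfold TT. apply Rdiv_lt_0_compat; [nra|lra]. Qed.
Lemma TT_xx : TT * xx = INR k.
Proof. unfold TT, xx. pose proof (sqrt_sqrt (INR k) (pos_INR k)).
  replace (c * sqrt (INR k) / eps * (sqrt (INR k) * eps / c)) with (sqrt (INR k) * sqrt (INR k)) by (field; lra).
  exact H. Qed.
Lemma k_pos : 1 <= INR k.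
Proof. apply (le_INR 1). lia. Qed.

Lemma newp nb : 0 < nb -> c * sqrt (INR k) / (eps * nb) = TT / nb.
Proof. intros. unfold TT. field. lra. Qed.

Lemma step_false_f s i : (i < k)%nat ->
  tot k (step k eps c s i false) = S (tot k s) /\ nbt k (step k eps c s i false) = nbt k s /\
  Bctr (step k eps c s i false) = Bctr s /\ prob (step k eps c s i false) = prob s /\
  rounds (step k eps c s i false) = rounds s.
Proof. intros Hi. rewrite tot_step by auto. unfold step, nbt. simpl. tauto. Qed.

Lemma step_true_cont s i : (i < k)%nat -> S (Bctr s) <> k ->
  tot k (step k eps c s i true) = S (tot k s) /\ nbt k (step k eps c s i true) = nbt k s /\
  Bctr (step k eps c s i true) = S (Bctr s) /\ prob (step k eps c s i true) = prob s /\
  rounds (step k eps c s i true) = rounds s.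
Proof. intros Hi HB. rewrite tot_step by auto. unfold step, nbt.
  destruct (Nat.eqb_spec (S (Bctr s)) k) as [E|E]; [contradiction|]. simpl. tauto. Qed.

Lemma step_true_end s i : (i < k)%nat -> S (Bctr s) = k ->
  tot k (step k eps c s i true) = S (tot k s) /\ nbt k (step k eps c s i true) = S (tot k s) /\
  Bctr (step k eps c s i true) = 0%nat /\
  prob (step k eps c s i true) = Rmin 1 (TT / INR (S (tot k s))) /\
  rounds (step k eps c s i true) = S (rounds s).
Proof. intros Hi HB. rewrite tot_step by auto. unfold step, nbt.
  destruct (Nat.eqb_spec (S (Bctr s)) k) as [E|E]; [|contradiction]. simpl.
  rewrite sum_sites_upd by auto. fold (tot k s). rewrite newp. tauto.
  apply lt_0_INR; lia. Qed.

Definition Inv (s : state) : Prop :=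
  (Bctr s < k)%nat /\ (nbt k s <= tot k s)%nat /\
  ((prob s = 1 /\ tot k s = (nbt k s + Bctr s)%nat /\ INR (nbt k s) <= TT /\ nbt k s = (k * rounds s)%nat)
   \/ (TT < INR (nbt k s) /\ prob s = TT / INR (nbt k s))).

Lemma Inv_init : Inv init_state.
Proof. unfold Inv, init_state, tot, nbt; simpl.
  assert (forall m, sum_sites m (fun _ => 0%nat) = 0%nat) as Z.
  { induction m; [reflexivity|]. rewrite sum_sites_S, IHm. reflexivity. }
  rewrite Z. split; [lia|]. split; [lia|]. left. simpl. pose proof TT_pos. repeat split; try lra; lia. Qed.

Lemma Inv_case2_p s : TT < INR (nbt k s) -> prob s = TT / INR (nbt k s) -> 0 < prob s < 1.
Proof. intros H1 H2. pose proof TT_pos. rewrite H2. split. apply Rdiv_lt_0_compat; lra.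
  apply Rmult_lt_reg_r with (INR (nbt k s)); [lra|]. unfold Rdiv. rewrite Rmult_assoc, Rinv_l by lra. lra. Qed.

Lemma Inv_pinv s : Inv s -> pinv s.
Proof. intros (_&_&[(H0&_)|(H1&H2)]); unfold pinv. rewrite H0; lra. pose proof (Inv_case2_p s H1 H2). lra. Qed.

Lemma Rmin_TT n : 0 < n -> (TT / n >= 1 -> Rmin 1 (TT / n) = 1 /\ n <= TT) /\
   (TT / n < 1 -> Rmin 1 (TT / n) = TT / n /\ TT < n).
Proof. intros Hn. pose proof TT_pos as HT. split; intros H.
  - split. apply Rmin_left; lra. apply Rmult_le_reg_r with (/ n). apply Rinv_0_lt_compat; lra.
    rewrite Rinv_r by lra. unfold Rdiv in H. lra.
  - split. apply Rmin_right; lra. apply Rmult_lt_reg_r with (/ n). apply Rinv_0_lt_compat; lra.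
    rewrite Rinv_r by lra. unfold Rdiv in H. lra. Qed.

Lemma Inv_true s i : Inv s -> (i < k)%nat -> prob s <> 0 -> Inv (step k eps c s i true).
Proof. intros HI Hi Hp0. pose proof HI as (HB&Hn&Hc2).
  destruct (Nat.eq_dec (S (Bctr s)) k) as [E|E].
  - destruct (step_true_end s i Hi E) as (A1&A2&A3&A4&A5).
    unfold Inv. rewrite A1, A2, A3, A4, A5. split; [lia|]. split; [lia|].
    assert (0 < INR (S (tot k s))) by (apply lt_0_INR; lia).
    destruct (Rmin_TT _ H) as [R1 R2].
    destruct Hc2 as [(P1&P2&P3&P4)|(P1&P2)].
    + destruct (Rge_or_gt (TT / INR (S (tot k s))) 1) as [G|G].
      * left. destruct (R1 G). repeat split; auto; lia.
      * right. destruct (R2 G). split; auto.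
    + right. assert (TT < INR (S (tot k s))).
      { eapply Rlt_le_trans; [apply P1|]. apply le_INR; lia. }
      assert (TT / INR (S (tot k s)) < 1).
      { apply Rmult_lt_reg_r with (INR (S (tot k s))); [lra|]. unfold Rdiv. rewrite Rmult_assoc, Rinv_l by lra. lra. }
      destruct (R2 H1). split; auto.
  - destruct (step_true_cont s i Hi E) as (A1&A2&A3&A4&A5).
    unfold Inv. rewrite A1, A2, A3, A4, A5. split; [lia|]. split; [lia|].
    destruct Hc2 as [(P1&P2&P3&P4)|(P1&P2)]; [left|right]; repeat split; auto; lia. Qed.

Lemma Inv_false s i : Inv s -> (i < k)%nat -> prob s <> 1 -> Inv (step k eps c s i false).
Proof. intros HI Hi Hp1. pose proof HI as (HB&Hn&Hc2).
  destruct (step_false_f s i Hi) as (A1&A2&A3&A4&A5).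
  unfold Inv. rewrite A1, A2, A3, A4, A5. split; [lia|]. split; [lia|].
  destruct Hc2 as [(P1&P2&P3&P4)|(P1&P2)]; [contradiction|right; auto]. Qed.


Definition LL := ln (1 + xx).
Lemma LL_pos : 0 < LL.
Proof. unfold LL. pose proof xx_pos. rewrite <- ln_1. apply ln_increasing; lra. Qed.

Lemma M_end n : 0 < n -> n + INR k / (TT / n) = n * (1 + xx).
Proof. intros Hn. pose proof TT_pos. pose proof TT_xx.
  replace (INR k) with (TT * xx) by lra. field. lra. Qed.

Definition Phi_lo (s : state) : R :=
  if Rlt_dec (prob s) 1
  then ln (INR (tot k s) + (INR k - INR (Bctr s)) / prob s) - LL * INR (rounds s)
  else ln (TT + 2 * INR k).

Definition g_lo (s : state) : R := ln (INR (tot k s)) - LL * INR (rounds s).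

Lemma Inv_c2_pos s : Inv s -> prob s < 1 -> 0 < prob s /\ TT < INR (nbt k s) /\ prob s = TT / INR (nbt k s).
Proof. intros (_&_&[(H0&_)|(H1&H2)]) Hp. lra. pose proof (Inv_case2_p s H1 H2). tauto. Qed.

Lemma Inv_c1 s : Inv s -> ~ prob s < 1 -> prob s = 1 /\ tot k s = (nbt k s + Bctr s)%nat /\ INR (nbt k s) <= TT /\ nbt k s = (k * rounds s)%nat.
Proof. intros (_&_&[H|(H1&H2)]) Hp. tauto. pose proof (Inv_case2_p s H1 H2). lra. Qed.

Lemma tot_pos_c2 s : Inv s -> prob s < 1 -> 0 < INR (tot k s).
Proof. intros HI Hp. destruct (Inv_c2_pos s HI Hp) as (_&H&_). pose proof TT_pos.
  destruct HI as (_&Hn&_). apply le_INR in Hn. lra. Qed.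

Lemma g_lo_le s : Inv s -> g_lo s <= Phi_lo s.
Proof. intros HI. unfold g_lo, Phi_lo. pose proof (pos_INR (rounds s)). pose proof LL_pos.
  destruct (Rlt_dec (prob s) 1) as [Hp|Hp].
  - destruct (Inv_c2_pos s HI Hp) as (Hp0&_&_). pose proof (tot_pos_c2 s HI Hp).
    destruct HI as (HB&_). apply lt_INR in HB.
    assert (0 <= (INR k - INR (Bctr s)) / prob s) by (apply Rdiv_le_0_compat'; lra).
    assert (ln (INR (tot k s)) <= ln (INR (tot k s) + (INR k - INR (Bctr s)) / prob s)) by (apply ln_le'; lra). nra.
  - destruct (Inv_c1 s HI Hp) as (_&E&Hnb&_). destruct HI as (HB&_).
    assert (INR (tot k s) <= TT + INR k). { rewrite E, plus_INR. apply lt_INR in HB. lra. }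
    pose proof k_pos. pose proof TT_pos.
    assert (ln (INR (tot k s)) <= ln (TT + 2 * INR k)).
    { destruct (Req_dec (INR (tot k s)) 0) as [Z|Z]. rewrite Z, ln_0. apply ln_nonneg; lra.
      apply ln_le'. pose proof (pos_INR (tot k s)); lra. lra. }
    nra. Qed.

Lemma Phi_lo_super s i : Inv s -> (i < k)%nat ->
  prob s * Phi_lo (step k eps c s i true) + (1 - prob s) * Phi_lo (step k eps c s i false) <= Phi_lo s.
Proof. intros HI Hi. pose proof LL_pos. pose proof k_pos. pose proof TT_pos. pose proof xx_pos.
  destruct (Rlt_dec (prob s) 1) as [Hp|Hp].
  - destruct (Inv_c2_pos s HI Hp) as (Hp0&Hnb&Hpe). pose proof (tot_pos_c2 s HI Hp) as Htot.
    pose proof HI as (HB&Hn&_). pose proof HB as HBr. apply lt_INR in HBr.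
    set (n := INR (tot k s)) in *. set (B := INR (Bctr s)) in *. set (R0 := INR (rounds s)).
    set (M := n + (INR k - B) / prob s).
    assert (Ef : Phi_lo (step k eps c s i false) = ln (M + 1) - LL * R0).
    { destruct (step_false_f s i Hi) as (A1&A2&A3&A4&A5). unfold Phi_lo. rewrite A1, A3, A4, A5.
      destruct (Rlt_dec (prob s) 1); [|contradiction]. unfold M, n, B, R0. rewrite S_INR. f_equal. f_equal. lra. }
    assert (Et : Phi_lo (step k eps c s i true) = ln (M + 1 - 1 / prob s) - LL * R0).
    { destruct (Nat.eq_dec (S (Bctr s)) k) as [E|E].
      - destruct (step_true_end s i Hi E) as (A1&A2&A3&A4&A5). unfold Phi_lo. rewrite A1, A3, A4, A5.
        assert (Hn' : 0 < INR (S (tot k s))) by (apply lt_0_INR; lia).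
        destruct (Rmin_TT _ Hn') as [_ R2].
        assert (Hlt : TT < INR (S (tot k s))).
        { eapply Rlt_le_trans; [apply Hnb|]. apply le_INR; lia. }
        assert (Hlt1 : TT / INR (S (tot k s)) < 1).
        { apply Rmult_lt_reg_r with (INR (S (tot k s))); [lra|]. unfold Rdiv. rewrite Rmult_assoc, Rinv_l by lra. lra. }
        destruct (R2 Hlt1) as [R3 _]. rewrite R3.
        destruct (Rlt_dec (TT / INR (S (tot k s))) 1); [|contradiction].
        replace (INR k - INR 0) with (INR k) by (simpl; ring). rewrite M_end by lra.
        rewrite ln_mult by lra. fold LL. rewrite S_INR. fold n.
        assert (HM : M + 1 - 1 / prob s = n + 1).
        { unfold M. assert (HkB : INR k = B + 1) by (unfold B; rewrite <- S_INR, E; reflexivity).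
          rewrite HkB. field. lra. }
        rewrite HM. unfold R0. rewrite S_INR. ring.
      - destruct (step_true_cont s i Hi E) as (A1&A2&A3&A4&A5). unfold Phi_lo. rewrite A1, A3, A4, A5.
        destruct (Rlt_dec (prob s) 1); [|contradiction]. unfold M, n, B, R0. rewrite !S_INR. f_equal. f_equal.
        field. lra. }
    rewrite Ef, Et. unfold Phi_lo. destruct (Rlt_dec (prob s) 1); [|contradiction]. fold n B R0 M.
    assert (0 <= (INR k - B) / prob s) by (apply Rdiv_le_0_compat'; lra).
    assert (HBk : B + 1 <= INR k) by (unfold B; rewrite <- S_INR; apply le_INR; lia).
    assert (Hpos : 0 < M + 1 - 1 / prob s).
    { unfold M. assert ((INR k - B)/prob s - 1/prob s = (INR k - B - 1)/prob s) by (field; lra).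
      assert (0 <= (INR k - B - 1) / prob s) by (apply Rdiv_le_0_compat'; lra). lra. }
    assert (HM1 : 0 < M + 1) by (unfold M; lra).
    pose proof (ln_concave2 (prob s) (M + 1 - 1/prob s) (M+1) ltac:(lra) Hpos HM1) as Hc2.
    replace (prob s * (M + 1 - 1 / prob s) + (1 - prob s) * (M + 1)) with M in Hc2 by (field; lra).
    nra.
  - destruct (Inv_c1 s HI Hp) as (Hp1&Et&Hnb&Hkr). rewrite Hp1. unfold Phi_lo at 3.
    destruct (Rlt_dec (prob s) 1); [contradiction|].
    replace (1 - 1) with 0 by ring. rewrite Rmult_0_l, Rmult_1_l, Rplus_0_r.
    pose proof HI as (HB&_).
    destruct (Nat.eq_dec (S (Bctr s)) k) as [E|E].
    + destruct (step_true_end s i Hi E) as (A1&A2&A3&A4&A5). unfold Phi_lo. rewrite A1, A3, A4, A5.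
      destruct (Rlt_dec (Rmin 1 (TT / INR (S (tot k s)))) 1) as [Q|Q]; [|lra].
      assert (Hn' : 0 < INR (S (tot k s))) by (apply lt_0_INR; lia).
      destruct (Rmin_TT _ Hn') as [R1 R2].
      destruct (Rge_or_gt (TT / INR (S (tot k s))) 1) as [G|G]. destruct (R1 G); lra.
      destruct (R2 G) as [R3 _]. rewrite R3.
      replace (INR k - INR 0) with (INR k) by (simpl; ring). rewrite M_end by lra.
      rewrite ln_mult by lra. fold LL. rewrite S_INR.
      assert (INR (tot k s) + 1 <= TT + 2 * INR k).
      { rewrite Et, plus_INR. apply lt_INR in HB. lra. }
      assert (ln (INR (tot k s) + 1) <= ln (TT + 2 * INR k)).
      { apply ln_le'. pose proof (pos_INR (tot k s)); lra. lra. }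
      pose proof (pos_INR (rounds s)). assert (0 <= LL * INR (rounds s)) by (apply Rmult_le_pos; lra). rewrite S_INR. lra.
    + destruct (step_true_cont s i Hi E) as (A1&A2&A3&A4&A5). unfold Phi_lo. rewrite A4.
      destruct (Rlt_dec (prob s) 1); [contradiction|]. lra. Qed.

Lemma lower_main adv : (forall h, (adv h < k)%nat) -> forall N, (1 <= N)%nat ->
  ln (INR N) - LL * ERounds k eps c adv N <= ln (TT + 2 * INR k).
Proof. intros Hadv N HN.
  assert (expect k eps c adv N [] init_state g_lo <= Phi_lo init_state).
  { apply (expect_super k eps c adv Hadv Inv Phi_lo g_lo).
    - apply Inv_pinv.
    - apply Inv_true.
    - apply Inv_false.
    - apply Phi_lo_super.
    - apply g_lo_le.
    - apply Inv_init. }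
  assert (Phi_lo init_state = ln (TT + 2 * INR k)).
  { unfold Phi_lo, init_state. simpl. destruct (Rlt_dec 1 1); [lra|reflexivity]. }
  rewrite (expect_ext k eps c adv Hadv N [] init_state g_lo (fun s => (- LL) * INR (rounds s) + ln (INR N))) in H.
  - rewrite expect_lin in H. unfold ERounds. lra.
  - intros s' Hs'. unfold g_lo. rewrite Hs'. unfold tot, init_state. simpl.
    assert (forall m, sum_sites m (fun _ => 0%nat) = 0%nat) as Z.
    { induction m; [reflexivity|]. rewrite sum_sites_S, IHm. reflexivity. }
    rewrite Z. simpl. ring. Qed.

Lemma exp_le1 y : y <= 0 -> exp y <= 1.
Proof. intros. apply Rle_trans with (exp 0). apply exp_le'; lra. rewrite exp_0; lra. Qed.

Definition th := 1/256.
Definition lamP := lamx xx.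
Definition betP := betx xx.
Definition K0 := exp (th * (TT / INR k + 2)).
Definition gam := exp (th - lamP * ln (1 + betP * xx)).

Definition Mb (s : state) := INR (tot k s) + betP * (INR k - INR (Bctr s)) / prob s.

Definition Phi_up (s : state) : R :=
  if Rlt_dec (prob s) 1 then exp (th * (INR (rounds s) + 1)) * exp (- lamP * ln (Mb s)) else K0.

Definition g_up (s : state) : R := gam * exp (th * INR (rounds s)) * exp (- lamP * ln (INR (tot k s))).

Lemma gam_le1 : gam <= 1.
Proof. unfold gam, lamP, betP. pose proof (P_gamma xx xx_pos). apply exp_le1.
  unfold th. lra. Qed.

Lemma R_le_c1 s : Inv s -> ~ prob s < 1 -> INR (rounds s) <= TT / INR k.
Proof. intros HI Hp. destruct (Inv_c1 s HI Hp) as (_&_&Hnb&Hkr). rewrite Hkr, mult_INR in Hnb.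
  pose proof k_pos. apply Rmult_le_reg_l with (INR k); [lra|].
  replace (INR k * (TT / INR k)) with TT by (field; lra). lra. Qed.

Lemma g_up_le s : Inv s -> g_up s <= Phi_up s.
Proof. intros HI. unfold g_up, Phi_up. pose proof lam_pos xx xx_pos as Hl. fold lamP in Hl.
  pose proof (bet_pos xx xx_pos) as Hb. fold betP in Hb. pose proof xx_pos. pose proof TT_pos. pose proof k_pos.
  destruct (Rlt_dec (prob s) 1) as [Hp|Hp].
  - destruct (Inv_c2_pos s HI Hp) as (Hp0&Hnb&Hpe). pose proof (tot_pos_c2 s HI Hp) as Hn.
    destruct HI as (HB&Hnn&_). apply lt_INR in HB. apply le_INR in Hnn.
    assert (HM1 : 0 <= betP * (INR k - INR (Bctr s)) / prob s).
    { apply Rdiv_le_0_compat'; [apply Rmult_le_pos|]; lra. }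
    assert (HM2 : betP * (INR k - INR (Bctr s)) / prob s <= betP * xx * INR (tot k s)).
    { rewrite Hpe. replace (betP * (INR k - INR (Bctr s)) / (TT / INR (nbt k s))) with
        (betP * INR (nbt k s) * ((INR k - INR (Bctr s)) / TT)) by (field; lra).
      assert ((INR k - INR (Bctr s)) / TT <= xx).
      { apply Rmult_le_reg_r with TT; [lra|]. replace ((INR k - INR (Bctr s)) / TT * TT) with (INR k - INR (Bctr s)) by (field; lra).
        pose proof TT_xx. pose proof (pos_INR (Bctr s)). lra. }
      assert (0 <= (INR k - INR (Bctr s)) / TT) by (apply Rdiv_le_0_compat'; lra).
      assert (betP * INR (nbt k s) * ((INR k - INR (Bctr s)) / TT) <= betP * INR (nbt k s) * xx).
      { apply Rmult_le_compat_l; [apply Rmult_le_pos|]; lra. }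
      assert (betP * INR (nbt k s) * xx <= betP * xx * INR (tot k s)).
      { replace (betP * INR (nbt k s) * xx) with (betP * xx * INR (nbt k s)) by ring.
        apply Rmult_le_compat_l; [apply Rmult_le_pos|]; lra. }
      lra. }
    assert (Hln : ln (Mb s) <= ln (INR (tot k s)) + ln (1 + betP * xx)).
    { rewrite <- ln_mult by nra. apply ln_le'. unfold Mb; lra. unfold Mb. nra. }
    unfold gam. rewrite <- !exp_plus. apply exp_le'.
    assert (lamP * ln (Mb s) <= lamP * (ln (INR (tot k s)) + ln (1 + betP * xx))) by (apply Rmult_le_compat_l; lra).
    lra.
  - pose proof (R_le_c1 s HI Hp). pose proof gam_le1.
    assert (exp (- lamP * ln (INR (tot k s))) <= 1).
    { apply exp_le1. destruct (Req_dec (INR (tot k s)) 0) as [Z|Z].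
      rewrite Z, ln_0. lra. assert (Ht1 : 1 <= INR (tot k s)).
      { destruct (tot k s). simpl in Z; lra. apply (le_INR 1); lia. }
      pose proof (ln_nonneg _ Ht1). assert (0 <= lamP * ln (INR (tot k s))) by (apply Rmult_le_pos; lra). lra. }
    assert (exp (th * INR (rounds s)) <= K0).
    { unfold K0. apply exp_le'. unfold th. lra. }
    pose proof (exp_pos (th * INR (rounds s))). pose proof (exp_pos (- lamP * ln (INR (tot k s)))).
    assert (0 <= gam) by (unfold gam; left; apply exp_pos).
    assert (gam * exp (th * INR (rounds s)) <= 1 * K0).
    { apply Rmult_le_compat; lra. }
    assert (gam * exp (th * INR (rounds s)) * exp (- lamP * ln (INR (tot k s))) <= gam * exp (th * INR (rounds s)) * 1).
    { apply Rmult_le_compat_l; [apply Rmult_le_pos|]; lra. }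
    lra. Qed.

Lemma Mb_end s i : (i < k)%nat -> S (Bctr s) = k -> TT < INR (S (tot k s)) ->
  prob (step k eps c s i true) = TT / INR (S (tot k s)) /\
  Mb (step k eps c s i true) = INR (S (tot k s)) * (1 + betP * xx).
Proof. intros Hi E Hlt. destruct (step_true_end s i Hi E) as (A1&A2&A3&A4&A5).
  pose proof TT_pos. assert (Hn' : 0 < INR (S (tot k s))) by lra.
  assert (Hlt1 : TT / INR (S (tot k s)) < 1).
  { apply Rmult_lt_reg_r with (INR (S (tot k s))); [lra|]. unfold Rdiv. rewrite Rmult_assoc, Rinv_l by lra. lra. }
  destruct (Rmin_TT _ Hn') as [_ R2]. destruct (R2 Hlt1) as [R3 _].
  split. rewrite A4; exact R3.
  unfold Mb. rewrite A1, A3, A4, R3. pose proof TT_xx. simpl (INR 0).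
  replace (INR k) with (TT * xx) by lra. field. lra. Qed.

Lemma Phi_up_super s i : Inv s -> (i < k)%nat ->
  prob s * Phi_up (step k eps c s i true) + (1 - prob s) * Phi_up (step k eps c s i false) <= Phi_up s.
Proof. intros HI Hi. pose proof k_pos. pose proof TT_pos. pose proof xx_pos as Hx. pose proof TT_xx as Htx.
  pose proof (lam_pos xx xx_pos) as Hl. fold lamP in Hl.
  pose proof (bet_pos xx xx_pos) as Hb. fold betP in Hb.
  pose proof (bet_lam xx xx_pos) as Hbl. fold lamP betP in Hbl.
  pose proof (lam_x xx xx_pos) as Hlx. fold lamP in Hlx.
  pose proof (P_gamma xx xx_pos) as Hg. fold lamP betP in Hg.
  pose proof (P_lamb xx xx_pos) as Hlb. fold lamP betP in Hlb.
  destruct (Rlt_dec (prob s) 1) as [Hp|Hp].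
  - destruct (Inv_c2_pos s HI Hp) as (Hp0&Hnb&Hpe). pose proof (tot_pos_c2 s HI Hp) as Htot.
    pose proof HI as (HB&Hn&_). pose proof HB as HBr. apply lt_INR in HBr. pose proof Hn as Hnr. apply le_INR in Hnr.
    set (n := INR (tot k s)) in *. set (B := INR (Bctr s)) in *. set (R0 := INR (rounds s)).
    set (nb := INR (nbt k s)) in *.
    set (a := betP / prob s).
    assert (Ha0 : 0 < a) by (unfold a; apply Rdiv_lt_0_compat; lra).
    assert (HMa : Mb s = n + (INR k - B) * a) by (unfold Mb, a, n, B; field; lra).
    set (M := Mb s) in *.
    set (cc := exp (th * (R0 + 1))).
    assert (Hcc : 0 < cc) by apply exp_pos.
    assert (HPs : Phi_up s = cc * exp (- lamP * ln M)).
    { unfold Phi_up. destruct (Rlt_dec (prob s) 1); [reflexivity|contradiction]. }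
    assert (Ef : Phi_up (step k eps c s i false) = cc * exp (- lamP * ln (M + 1))).
    { destruct (step_false_f s i Hi) as (A1&A2&A3&A4&A5). unfold Phi_up. rewrite A4, A5.
      destruct (Rlt_dec (prob s) 1); [|contradiction]. fold R0 cc. do 3 f_equal.
      unfold Mb. rewrite A1, A3, A4, S_INR. fold n B. f_equal. rewrite HMa. unfold a. field. lra. }
    assert (Hab : a <= betP * xx * n).
    { unfold a. rewrite Hpe. replace (betP / (TT / nb)) with (betP * (nb / TT)) by (field; lra).
      assert (nb / TT <= xx * n).
      { apply Rmult_le_reg_r with TT; [lra|]. replace (nb / TT * TT) with nb by (field; lra).
        assert (n <= xx * n * TT) by nra. lra. }
      replace (betP * xx * n) with (betP * (xx * n)) by ring. apply Rmult_le_compat_l; lra. }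
    assert (Hla : lamP * a <= n + 2 * a).
    { unfold a. rewrite Hpe. replace (betP / (TT / nb)) with ((nb / TT) * betP) by (field; lra).
      assert (lamP * betP <= TT + 2 * betP).
      { apply Rmult_le_reg_r with xx; [lra|]. nra. }
      assert (0 < nb / TT) by (apply Rdiv_lt_0_compat; lra).
      assert (lamP * (nb / TT * betP) = (nb / TT) * (lamP * betP)) by ring.
      assert ((nb / TT) * (lamP * betP) <= (nb / TT) * (TT + 2 * betP)) by (apply Rmult_le_compat_l; lra).
      replace ((nb / TT) * (TT + 2 * betP)) with (nb + 2 * (nb / TT * betP)) in H4 by (field; lra). lra. }
    destruct (Nat.eq_dec (S (Bctr s)) k) as [E|E].
    + assert (Hlt : TT < INR (S (tot k s))).
      { eapply Rlt_le_trans; [apply Hnb|]. apply le_INR; lia. }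
      destruct (Mb_end s i Hi E Hlt) as [Q1 Q2].
      destruct (step_true_end s i Hi E) as (A1&A2&A3&A4&A5).
      assert (Et : Phi_up (step k eps c s i true) = cc * exp (th - lamP * ln (1 + betP * xx) - lamP * ln (n + 1))).
      { unfold Phi_up. rewrite Q1, Q2, A5. destruct (Rlt_dec (TT / INR (S (tot k s))) 1) as [_|Z].
        2:{ exfalso. apply Z. apply Rmult_lt_reg_r with (INR (S (tot k s))); [lra|]. unfold Rdiv. rewrite Rmult_assoc, Rinv_l by lra. lra. }
        rewrite !S_INR. fold n R0. unfold cc. rewrite ln_mult by nra. rewrite <- !exp_plus. f_equal. ring. }
      assert (HkB : INR k - B = 1) by (unfold B; rewrite <- E, S_INR; ring).
      rewrite HMa, HkB, Rmult_1_l in HPs, Ef. rewrite HPs, Ef, Et.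
      pose proof (core_E (prob s) a lamP betP th xx n ltac:(lra) Hb Hbl Hl Hx Hlx ltac:(unfold th; lra) Hg
        eq_refl Htot Hab) as C.
      assert (cc * (prob s * exp (th - lamP * ln (1 + betP * xx) - lamP * ln (n + 1)) +
         (1 - prob s) * exp (- lamP * ln (n + a + 1))) <= cc * exp (- lamP * ln (n + a))) by (apply Rmult_le_compat_l; lra).
      lra.
    + destruct (step_true_cont s i Hi E) as (A1&A2&A3&A4&A5).
      assert (Et : Phi_up (step k eps c s i true) = cc * exp (- lamP * ln (M + 1 - a))).
      { unfold Phi_up. rewrite A4, A5. destruct (Rlt_dec (prob s) 1); [|contradiction]. fold R0 cc. do 3 f_equal.
        f_equal. unfold Mb at 1. rewrite A1, A3, A4, !S_INR. fold n B. rewrite HMa. unfold a. field. lra. }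
      assert (HB2 : 2 <= INR k - B).
      { assert ((S (S (Bctr s)) <= k)%nat) by lia. apply le_INR in H1. rewrite !S_INR in H1. unfold B. lra. }
      assert (H2a : 2 * a <= M). { rewrite HMa. nra. }
      assert (Hlam : lamP * a <= M). { rewrite HMa. nra. }
      pose proof (core_N (prob s) a lamP betP M ltac:(lra) Hb Hl eq_refl H2a Hlam) as C.
      rewrite HPs, Ef, Et.
      assert (cc * (prob s * exp (- lamP * ln (M + 1 - a)) + (1 - prob s) * exp (- lamP * ln (M + 1)))
         <= cc * exp (- lamP * ln M)) by (apply Rmult_le_compat_l; lra).
      lra.
  - destruct (Inv_c1 s HI Hp) as (Hp1&Et&Hnb&Hkr). rewrite Hp1. unfold Phi_up at 3.
    destruct (Rlt_dec (prob s) 1); [contradiction|].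
    replace (1 - 1) with 0 by ring. rewrite Rmult_0_l, Rmult_1_l, Rplus_0_r.
    pose proof HI as (HB&_). pose proof (R_le_c1 s HI Hp) as HR.
    destruct (Nat.eq_dec (S (Bctr s)) k) as [E|E].
    + destruct (step_true_end s i Hi E) as (A1&A2&A3&A4&A5).
      destruct (Rlt_dec (prob (step k eps c s i true)) 1) as [Q|Q].
      * assert (Hn' : 0 < INR (S (tot k s))) by (apply lt_0_INR; lia).
        destruct (Rmin_TT _ Hn') as [R1 R2]. rewrite A4 in Q.
        destruct (Rge_or_gt (TT / INR (S (tot k s))) 1) as [G|G]. destruct (R1 G); lra.
        destruct (R2 G) as [_ Hlt].
        destruct (Mb_end s i Hi E Hlt) as [Q1 Q2].
        unfold Phi_up. rewrite Q1, Q2, A5. destruct (Rlt_dec (TT / INR (S (tot k s))) 1) as [_|Z]; [|lra].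
        assert (1 <= INR (S (tot k s)) * (1 + betP * xx)).
        { assert (1 <= INR (S (tot k s))) by (apply (le_INR 1); lia). assert (0 <= betP * xx) by nra. nra. }
        assert (exp (- lamP * ln (INR (S (tot k s)) * (1 + betP * xx))) <= 1).
        { apply exp_le1. pose proof (ln_nonneg _ H1). nra. }
        assert (exp (th * (INR (S (rounds s)) + 1)) <= K0).
        { unfold K0. apply exp_le'. rewrite S_INR. unfold th. lra. }
        pose proof (exp_pos (th * (INR (S (rounds s)) + 1))). pose proof (exp_pos (- lamP * ln (INR (S (tot k s)) * (1 + betP * xx)))).
        assert (exp (th * (INR (S (rounds s)) + 1)) * exp (- lamP * ln (INR (S (tot k s)) * (1 + betP * xx))) <=
                exp (th * (INR (S (rounds s)) + 1)) * 1) by (apply Rmult_le_compat_l; lra).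
        lra.
      * unfold Phi_up. destruct (Rlt_dec (prob (step k eps c s i true)) 1); [contradiction|lra].
    + destruct (step_true_cont s i Hi E) as (A1&A2&A3&A4&A5). unfold Phi_up. rewrite A4.
      destruct (Rlt_dec (prob s) 1); [contradiction|]. lra. Qed.

Lemma upper_main adv : (forall h, (adv h < k)%nat) -> forall N, (1 <= N)%nat ->
  expect k eps c adv N [] init_state (fun s => exp (th * INR (rounds s))) <= K0 / gam * exp (lamP * ln (INR N)).
Proof. intros Hadv N HN.
  assert (expect k eps c adv N [] init_state g_up <= Phi_up init_state).
  { apply (expect_super k eps c adv Hadv Inv Phi_up g_up).
    - apply Inv_pinv.
    - apply Inv_true.
    - apply Inv_false.
    - apply Phi_up_super.
    - apply g_up_le.
    - apply Inv_init. }
  assert (Phi_up init_state = K0).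
  { unfold Phi_up, init_state. simpl. destruct (Rlt_dec 1 1); [lra|reflexivity]. }
  rewrite (expect_ext k eps c adv Hadv N [] init_state g_up
     (fun s => (gam * exp (- lamP * ln (INR N))) * exp (th * INR (rounds s)) + 0)) in H.
  - rewrite expect_lin in H. rewrite H0 in H.
    assert (Hg : 0 < gam) by (unfold gam; apply exp_pos).
    assert (exp (- lamP * ln (INR N)) * exp (lamP * ln (INR N)) = 1).
    { rewrite <- exp_plus. replace (- lamP * ln (INR N) + lamP * ln (INR N)) with 0 by ring. apply exp_0. }
    pose proof (exp_pos (lamP * ln (INR N))). pose proof (exp_pos (- lamP * ln (INR N))).
    set (E := expect k eps c adv N [] init_state (fun s => exp (th * INR (rounds s)))) in *.
    apply Rmult_le_reg_l with (gam * exp (- lamP * ln (INR N))). apply Rmult_lt_0_compat; lra.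
    replace (gam * exp (- lamP * ln (INR N)) * (K0 / gam * exp (lamP * ln (INR N)))) with
      (K0 * (exp (- lamP * ln (INR N)) * exp (lamP * ln (INR N)))) by (field; lra).
    rewrite H1. lra.
  - intros s' Hs'. unfold g_up. rewrite Hs'. unfold tot, init_state. simpl.
    assert (forall m, sum_sites m (fun _ => 0%nat) = 0%nat) as Z.
    { induction m; [reflexivity|]. rewrite sum_sites_S, IHm. reflexivity. }
    rewrite Z. simpl. ring. Qed.
End Proto.

Lemma expect_fext k eps c adv N : forall h s g g', (forall s, g s = g' s) ->
  expect k eps c adv N h s g = expect k eps c adv N h s g'.
Proof. induction N; intros h s g g' H; cbn [expect]; [apply H|]. rewrite (IHN _ _ g g' H), (IHN _ (step k eps c s (adv h) false) g g' H). reflexivity. Qed.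

Theorem mainTheorem7 :
  exists C1 C2 C3 : R, 0 < C1 /\ 0 < C2 /\ 0 < C3 /\
  forall (k : nat) (eps c : R),
    (1 <= k)%nat -> 0 < eps -> 1 <= c ->
    exists N0 : nat,
    forall (adv : adversary),
      (forall h, (adv h < k)%nat) ->
      forall N : nat, (N0 <= N)%nat ->
        C1 * rate k eps c N <= ERounds k eps c adv N <= C2 * rate k eps c N /\
        forall delta : R, 0 < delta < 1 ->
          PRoundsLe k eps c adv N (C3 * (rate k eps c N + ln (1 / delta)))
            >= 1 - delta.
Proof.
  exists (1/2), 512, 512. split; [lra|]. split; [lra|]. split; [lra|].
  intros k eps c Hk He Hc.
  pose proof (LL_pos k eps c Hk He Hc) as HL.
  set (L := LL k eps c) in *.
  set (Kc := K0 k eps c / gam k eps c).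
  assert (HKc : 0 < Kc) by (unfold Kc, K0, gam; apply Rdiv_lt_0_compat; apply exp_pos).
  pose proof (TT_pos k eps c Hk He Hc). pose proof (k_pos k Hk).
  set (Y := Rmax (Rmax (2 * ln (TT k eps c + 2 * INR k)) (L * ln Kc)) 0).
  destruct (INR_unbounded (exp Y)) as [N0 HN0].
  exists N0. intros adv Hadv N HN.
  assert (HNr : exp Y < INR N) by (apply le_INR in HN; lra).
  assert (HN1 : (1 <= N)%nat).
  { destruct N. simpl in HNr. pose proof (exp_pos Y); lra. lia. }
  assert (HlnN : Y <= ln (INR N)).
  { rewrite <- (ln_exp Y). apply ln_le'. apply exp_pos. lra. }
  assert (HY1 : 2 * ln (TT k eps c + 2 * INR k) <= ln (INR N)).
  { unfold Y in HlnN. pose proof (Rmax_l (Rmax (2 * ln (TT k eps c + 2 * INR k)) (L * ln Kc)) 0).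
    pose proof (Rmax_l (2 * ln (TT k eps c + 2 * INR k)) (L * ln Kc)). lra. }
  assert (HY2 : L * ln Kc <= ln (INR N)).
  { unfold Y in HlnN. pose proof (Rmax_l (Rmax (2 * ln (TT k eps c + 2 * INR k)) (L * ln Kc)) 0).
    pose proof (Rmax_r (2 * ln (TT k eps c + 2 * INR k)) (L * ln Kc)). lra. }
  assert (HY3 : 0 <= ln (INR N)).
  { unfold Y in HlnN. pose proof (Rmax_r (Rmax (2 * ln (TT k eps c + 2 * INR k)) (L * ln Kc)) 0). lra. }
  assert (Hrate : rate k eps c N = ln (INR N) / L) by reflexivity.
  assert (HlamP : lamP k eps c = 1 / L) by reflexivity.
  assert (HlnK : ln Kc <= rate k eps c N).
  { rewrite Hrate. apply Rmult_le_reg_r with L; [lra|]. replace (ln (INR N) / L * L) with (ln (INR N)) by (field; lra). lra. }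
  assert (Hr0 : 0 <= rate k eps c N) by (rewrite Hrate; apply Rdiv_le_0_compat'; lra).
  pose proof (lower_main k eps c Hk He Hc adv Hadv N HN1) as Hlo. fold L in Hlo.
  pose proof (upper_main k eps c Hk He Hc adv Hadv N HN1) as Hup. fold Kc in Hup.
  rewrite HlamP in Hup.
  replace (1 / L * ln (INR N)) with (rate k eps c N) in Hup by (rewrite Hrate; field; lra).
  set (E' := expect k eps c adv N [] init_state (fun s => exp (th * INR (rounds s)))) in *.
  assert (Hpinv : pinv init_state) by (unfold pinv, init_state; simpl; lra).
  assert (HE'0 : 0 < E') by (apply expect_pos; [lra|lra|exact Hpinv|intros; apply exp_pos]).
  split; [split|].
  -
    rewrite Hrate. set (E := ERounds k eps c adv N) in *.
    assert (L * E >= ln (INR N) / 2) by lra.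
    apply Rmult_le_reg_r with L; [lra|]. replace (1 / 2 * (ln (INR N) / L) * L) with (ln (INR N) / 2) by (field; lra). lra.
  -
    pose proof (expect_jensen k eps c adv N [] init_state (fun s => th * INR (rounds s)) ltac:(lra) He Hpinv) as J.
    fold E' in J.
    rewrite (expect_fext k eps c adv N [] init_state _ (fun s => th * INR (rounds s) + 0)) in J by (intros; ring).
    rewrite (expect_lin k eps c adv N [] init_state (fun s => INR (rounds s)) th 0) in J.
    fold (ERounds k eps c adv N) in J.
    assert (ln E' <= ln Kc + rate k eps c N).
    { rewrite <- (ln_exp (rate k eps c N)), <- ln_mult by (try apply exp_pos; lra). apply ln_le'; lra. }
    fold E' in J. replace (th * ERounds k eps c adv N) with (1/256 * ERounds k eps c adv N) in J by reflexivity. lra.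
  - intros delta Hd.
    set (r := 512 * (rate k eps c N + ln (1 / delta))).
    assert (Hld : 0 < ln (1 / delta)).
    { rewrite <- ln_1. apply ln_increasing; [lra|]. apply Rmult_lt_reg_r with delta; [lra|].
      replace (1 / delta * delta) with 1 by (field; lra). lra. }
    unfold PRoundsLe. fold r.
    assert (HM : expect k eps c adv N [] init_state (fun s => (- exp (- th * r)) * exp (th * INR (rounds s)) + 1)
      <= expect k eps c adv N [] init_state (fun s => if Rle_dec (INR (rounds s)) r then 1 else 0)).
    { apply expect_mono; [lra|lra|exact Hpinv|]. intros s. destruct (Rle_dec (INR (rounds s)) r).
      - pose proof (exp_pos (- th * r)). pose proof (exp_pos (th * INR (rounds s))).
        assert (0 < exp (- th * r) * exp (th * INR (rounds s))) by (apply Rmult_lt_0_compat; lra). lra.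
      - assert (1 <= exp (- th * r) * exp (th * INR (rounds s))).
        { rewrite <- exp_plus. rewrite <- exp_0 at 1. apply exp_le'. unfold th. lra. }
        lra. }
    rewrite expect_lin in HM. fold E' in HM.
    assert (exp (- th * r) * E' <= delta).
    { assert (exp (- th * r) * E' <= exp (- th * r) * (Kc * exp (rate k eps c N))) by (apply Rmult_le_compat_l; [left; apply exp_pos|lra]).
      assert (exp (- th * r) * (Kc * exp (rate k eps c N)) = exp (- th * r + ln Kc + rate k eps c N)).
      { rewrite !exp_plus, exp_ln by lra. ring. }
      assert (exp (- th * r + ln Kc + rate k eps c N) <= exp (ln delta)).
      { apply exp_le'. assert (ln (1 / delta) = - ln delta).
        { unfold Rdiv. rewrite Rmult_1_l, ln_Rinv; lra. }
        unfold r, th. lra. }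
      rewrite exp_ln in H3 by lra. lra. }
    lra.
Qed.
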